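(* Assume $\gamma\neq\pm2$ and let $z_\pm=\frac12\big(-\gamma\pm\sqrt{\gamma^2-4}\big)$ be the fixed points of $\sigma$ (so $z_+z_-=1$). Define the Ragnisco–Bruschi Lax matrices $L^{\rho_\pm}=T+z_\pm S$ (so that $L^{\rho_\pm}=z_\pm\mathcal L(z_\mp)$). With respect to the quadratic bracket $\{\cdot,\cdot\}_{(2)}$ below, for all $i,j,k,l$, $$\{L^{\rho_+}_{ij},L^{\rho_-}_{kl}\}_{(2)}=-\frac{\nu}{4}\Big(\mathfrak s_{ik}L^{\rho_+}_{kj}L^{\rho_-}_{il}+\mathfrak s_{jl}L^{\rho_-}_{kj}L^{\rho_+}_{il}+\mathfrak s_{jk}L^{\rho_+}_{ik}L^{\rho_-}_{jl}+\mathfrak s_{il}L^{\rho_-}_{ki}L^{\rho_+}_{lj}\Big).$$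
   Context: Fix $N\ge2$, $\nu\neq0$. Variables $p_1,\dots,p_N>0$, $q_1,\dots,q_N$ pairwise distinct with fixed ordering; $q_{ij}=q_i-q_j$, $\mathfrak s_{ij}=\mathrm{sgn}(q_i-q_j)$, $\mathfrak s_{ii}=0$. $\sigma(z)=z^\sigma=-\frac{\frac{\gamma}{2}z+1}{z+\frac{\gamma}{2}}$. $T=\sum_{i,j}\sqrt{p_ip_j}\cosh\frac{\nu}{2}(q_i-q_j)E_{ij}$, $A=\sum_{i,j}\sqrt{p_ip_j}\sinh\frac{\nu}{2}(q_i-q_j)E_{ij}$, $S=\sum_{i,j}\sqrt{p_ip_j}\,\mathfrak s_{ij}\sinh\frac{\nu}{2}(q_i-q_j)E_{ij}$, and $\mathcal L(z)=\frac{z+z^\sigma}{2}T+S+\frac{z-z^\sigma}{2}A$. With $\mathcal Q_{ik}=(\gamma-2)e^{\nu|q_{ik}|}-(\gamma+2)e^{-\nu|q_{ik}|}+4$ and $\mathcal S_{ik}=(\gamma-2)e^{\nu|q_{ik}|}+(\gamma+2)e^{-\nu|q_{ik}|}$, the bracket $\{\cdot,\cdot\}_{(2)}$ on functions of $p_i,q_{ij}$ is: $\{p_i,p_k\}_{(2)}=\frac{\nu}{4}\mathfrak s_{ik}p_ip_k(\mathcal Q_{ik}-4)$, $\{q_{ij},p_k\}_{(2)}=-\frac14p_k(\mathcal S_{ik}-\mathcal S_{jk})$, $\{q_{ij},q_{kl}\}_{(2)}=-\frac{1}{4\nu}(\mathfrak s_{ik}\mathcal Q_{ik}-\mathfrak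 s_{jk}\mathcal Q_{jk}-\mathfrak s_{il}\mathcal Q_{il}+\mathfrak s_{jl}\mathcal Q_{jl})$. *)

(* Defs.v *)
From Stdlib Require Import Reals.
From Coquelicot Require Import Coquelicot.
Open Scope R_scope.

Definition sgn (x : R) : R :=
  if Rlt_dec 0 x then 1 else if Rlt_dec x 0 then -1 else 0.

(* phase-space point: p q : nat -> R, only indices < N matter *)
Definition sg (q : nat -> R) (i j : nat) : R := sgn (q i - q j).

Definition QQ (gamma nu : R) (q : nat -> R) (i k : nat) : R :=
  (gamma - 2) * exp (nu * Rabs (q i - q k)) - (gamma + 2) * exp (- nu * Rabs (q i - q k)) + 4.
Definition SS (gamma nu : R) (q : nat -> R) (i k : nat) : R :=
  (gamma - 2) * exp (nu * Rabs (q i - q k)) + (gamma + 2) * exp (- nu * Rabs (q i - q k)).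

(* Lifted structure functions of the quadratic bracket {.,.}_(2):
   {p_a,p_b} , {q_a,p_b} , {q_a,q_b}.  On functions of p_i and q_ij = q_i - q_j
   these reproduce exactly the brackets of the paper. *)
Definition Bpp gamma nu (p q : nat -> R) (a b : nat) : R :=
  nu / 4 * sg q a b * p a * p b * (QQ gamma nu q a b - 4).
Definition Bqp gamma nu (p q : nat -> R) (a b : nat) : R :=
  - / 4 * p b * SS gamma nu q a b.
Definition Bqq gamma nu (q : nat -> R) (a b : nat) : R :=
  - / (4 * nu) * (sg q a b * QQ gamma nu q a b).

Definition upd (x : nat -> R) (a : nat) (t : R) : nat -> R :=
  fun i => if Nat.eq_dec i a then t else x i.

Definition DeriveC (f : R -> C) (x : R) : C :=
  (Derive (fun t => Re (f t)) x, Derive (fun t => Im (f t)) x).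

Definition dP (F : (nat -> R) -> (nat -> R) -> C) (a : nat) (p q : nat -> R) : C :=
  DeriveC (fun t => F (upd p a t) q) (p a).
Definition dQ (F : (nat -> R) -> (nat -> R) -> C) (a : nat) (p q : nat -> R) : C :=
  DeriveC (fun t => F p (upd q a t)) (q a).

Fixpoint sumC (n : nat) (f : nat -> C) : C :=
  match n with O => RtoC 0 | S m => Cplus (sumC m f) (f m) end.

Definition PB2 (N : nat) (gamma nu : R) (F G : (nat -> R) -> (nat -> R) -> C)
  (p q : nat -> R) : C :=
  sumC N (fun a => sumC N (fun b =>
    Cplus (Cplus (Cmult (Cmult (dP F a p q) (dP G b p q)) (RtoC (Bpp gamma nu p q a b)))
                 (Cmult (Cmult (dQ F a p q) (dP G b p q)) (RtoC (Bqp gamma nu p q a b))))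
          (Cplus (Cmult (Cmult (dP F a p q) (dQ G b p q)) (RtoC (- Bqp gamma nu p q b a)))
                 (Cmult (Cmult (dQ F a p q) (dQ G b p q)) (RtoC (Bqq gamma nu q a b)))))).

Definition Tm (nu : R) (p q : nat -> R) (i j : nat) : R :=
  sqrt (p i * p j) * cosh (nu / 2 * (q i - q j)).
Definition Sm (nu : R) (p q : nat -> R) (i j : nat) : R :=
  sqrt (p i * p j) * sg q i j * sinh (nu / 2 * (q i - q j)).

Definition Lrho (nu : R) (z : C) (i j : nat) (p q : nat -> R) : C :=
  Cplus (RtoC (Tm nu p q i j)) (Cmult z (RtoC (Sm nu p q i j))).

Definition csqrtR (d : R) : C :=
  if Rle_dec 0 d then (sqrt d, 0) else (0, sqrt (- d)).

Definition zplus (gamma : R) : C :=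
  Cmult (RtoC (/2)) (Cplus (RtoC (- gamma)) (csqrtR (gamma ^ 2 - 4))).
Definition zminus (gamma : R) : C :=
  Cmult (RtoC (/2)) (Cminus (RtoC (- gamma)) (csqrtR (gamma ^ 2 - 4))).

(* Main.v *)
Require Import Defs.
From Stdlib Require Import Reals Lra Lia FunctionalExtensionality.
From Coquelicot Require Import Coquelicot.
Open Scope R_scope.

Definition dlt (a i : nat) : R := if Nat.eq_dec a i then 1 else 0.

Lemma sinh_opp x : sinh (- x) = - sinh x.
Proof. unfold sinh. rewrite Ropp_involutive. field. Qed.
Lemma cosh_opp x : cosh (- x) = cosh x.
Proof. unfold cosh. rewrite Ropp_involutive. field. Qed.

Lemma sgn_sinh c x : sgn x * sinh (c * x) = sinh (c * Rabs x).
Proof.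
  unfold sgn. destruct (Rlt_dec 0 x).
  - rewrite Rabs_right by lra. ring.
  - destruct (Rlt_dec x 0).
    + rewrite Rabs_left by lra. rewrite Ropp_mult_distr_r_reverse, sinh_opp. ring.
    + assert (x = 0) by lra. subst. rewrite Rabs_R0, Rmult_0_r. unfold sinh. rewrite Ropp_0. field.
Qed.

Lemma sign_cosh c x : x <> 0 -> sign x * cosh (c * Rabs x) = sgn x * cosh (c * x).
Proof.
  intros H. unfold sgn. destruct (Rlt_dec 0 x).
  - rewrite sign_eq_1, Rabs_right by lra. ring.
  - destruct (Rlt_dec x 0).
    + rewrite sign_eq_m1, Rabs_left by lra. rewrite Ropp_mult_distr_r_reverse, cosh_opp. ring.
    + lra.
Qed.

Lemma DeriveC_lin (z : C) (f1 f2 : R -> R) x d1 d2 :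
  is_derive f1 x d1 -> is_derive f2 x d2 ->
  DeriveC (fun t => Cplus (RtoC (f1 t)) (Cmult z (RtoC (f2 t)))) x = Cplus (RtoC d1) (Cmult z (RtoC d2)).
Proof.
  intros H1 H2. destruct z as [zr zi]. unfold DeriveC.
  apply injective_projections; simpl.
  - rewrite (Derive_ext _ (fun t => f1 t + zr * f2 t)).
    + assert (is_derive (fun t => f1 t + zr * f2 t) x (d1 + zr * d2)).
      { apply (is_derive_plus f1 (fun t => zr * f2 t)); auto. apply is_derive_scal; auto. }
      pose proof (is_derive_unique _ _ _ H) as E. simpl in E |- *. rewrite E. ring.
    + intros t. simpl. ring.
  - rewrite (Derive_ext _ (fun t => zi * f2 t)).
    + rewrite (is_derive_unique _ _ _ (is_derive_scal _ _ zi _ H2)). ring.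
    + intros t. simpl. ring.
Qed.

Lemma derP (p : nat -> R) i j a : 0 < p i -> 0 < p j ->
  is_derive (fun t => sqrt (upd p a t i * upd p a t j)) (p a)
    ((dlt a i * p j + dlt a j * p i) / (2 * sqrt (p i * p j))).
Proof.
  intros Hi Hj. unfold upd, dlt.
  destruct (Nat.eq_dec i a) as [E1|E1]; destruct (Nat.eq_dec j a) as [E2|E2];
  destruct (Nat.eq_dec a i); try congruence; destruct (Nat.eq_dec a j); try congruence;
  subst; auto_derive; try (apply Rmult_lt_0_compat; auto); try (unfold Rdiv; ring); auto.
Qed.

Lemma derQ1 nu (q : nat -> R) w i j a :
  is_derive (fun t => w * cosh (nu / 2 * (upd q a t i - upd q a t j))) (q a)
    (nu / 2 * w * sinh (nu / 2 * (q i - q j)) * (dlt a i - dlt a j)).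
Proof.
  unfold upd, dlt.
  destruct (Nat.eq_dec i a) as [E1|E1]; destruct (Nat.eq_dec j a) as [E2|E2];
  destruct (Nat.eq_dec a i); try congruence; destruct (Nat.eq_dec a j); try congruence;
  subst; auto_derive; auto; unfold Rminus; ring.
Qed.

Lemma derQ2 nu (q : nat -> R) w i j a : (i <> j -> q i <> q j) ->
  is_derive (fun t => w * sg (upd q a t) i j * sinh (nu / 2 * (upd q a t i - upd q a t j))) (q a)
    (nu / 2 * w * sg q i j * cosh (nu / 2 * (q i - q j)) * (dlt a i - dlt a j)).
Proof.
  intros Hq.
  apply (is_derive_ext (fun t => w * sinh (nu / 2 * Rabs (upd q a t i - upd q a t j)))).
  { intros t. cbv beta. unfold sg. rewrite <- sgn_sinh. symmetry; apply Rmult_assoc. }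
  unfold upd, dlt, sg.
  destruct (Nat.eq_dec i a) as [E1|E1]; destruct (Nat.eq_dec j a) as [E2|E2];
  destruct (Nat.eq_dec a i); try congruence; destruct (Nat.eq_dec a j); try congruence;
  subst.
  - apply (is_derive_ext (fun _ => w * sinh (nu / 2 * Rabs 0))).
    { intros t. rewrite Rminus_diag. reflexivity. }
    auto_derive; auto. ring.
  - assert (q a - q j <> 0) by (apply Rminus_eq_contra; auto).
    auto_derive. replace (q a + - q j) with (q a - q j) by ring. auto.
    replace (q a + - q j) with (q a - q j) by ring.
    transitivity (nu/2*w*(sign (q a - q j) * cosh (nu/2*Rabs (q a - q j)))). ring.
    rewrite sign_cosh by auto. ring.
  - assert (q i - q a <> 0) by (apply Rminus_eq_contra; auto).
    auto_derive. replace (q i + - q a) with (q i - q a) by ring. auto.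
    replace (q i + - q a) with (q i - q a) by ring.
    transitivity (- (nu/2*w*(sign (q i - q a) * cosh (nu/2*Rabs (q i - q a))))). ring.
    rewrite sign_cosh by auto. ring.
  - auto_derive; auto. ring.
Qed.

Definition PX (nu : R) (z : C) (p q : nat -> R) (i j : nat) (m : R) : C :=
  Cplus (RtoC (m / (2 * sqrt (p i * p j)) * cosh (nu / 2 * (q i - q j))))
        (Cmult z (RtoC (m / (2 * sqrt (p i * p j)) * (sg q i j * sinh (nu / 2 * (q i - q j)))))).
Definition QX (nu : R) (z : C) (p q : nat -> R) (i j : nat) : C :=
  Cplus (RtoC (nu / 2 * sqrt (p i * p j) * sinh (nu / 2 * (q i - q j))))
        (Cmult z (RtoC (nu / 2 * sqrt (p i * p j) * sg q i j * cosh (nu / 2 * (q i - q j))))).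

Lemma upd_same (x : nat -> R) a : upd x a (x a) = x.
Proof. apply functional_extensionality. intros b. unfold upd. destruct (Nat.eq_dec b a); subst; auto. Qed.

Lemma dP_L nu z p q i j a : 0 < p i -> 0 < p j ->
  dP (Lrho nu z i j) a p q =
  Cplus (Cmult (RtoC (dlt a i)) (PX nu z p q i j (p j)))
        (Cmult (RtoC (dlt a j)) (PX nu z p q i j (p i))).
Proof.
  intros Hi Hj. unfold dP, Lrho, Tm, Sm.
  set (d := (dlt a i * p j + dlt a j * p i) / (2 * sqrt (p i * p j))).
  rewrite (DeriveC_lin z _ _ (p a) (d * cosh (nu / 2 * (q i - q j)))
             (d * (sg q i j * sinh (nu / 2 * (q i - q j))))).
  - unfold PX, d. destruct z as [zr zi]. apply injective_projections; simpl; unfold Rdiv; ring.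
  - apply (is_derive_ext (fun t => cosh (nu / 2 * (q i - q j)) * sqrt (upd p a t i * upd p a t j))).
    { intros t. cbv beta. apply Rmult_comm. }
    replace (d * cosh (nu / 2 * (q i - q j))) with (cosh (nu / 2 * (q i - q j)) * d) by ring.
    apply is_derive_scal. apply derP; auto.
  - apply (is_derive_ext (fun t => (sg q i j * sinh (nu / 2 * (q i - q j))) * sqrt (upd p a t i * upd p a t j))).
    { intros t. cbv beta. rewrite Rmult_comm, Rmult_assoc. reflexivity. }
    replace (d * (sg q i j * sinh (nu / 2 * (q i - q j)))) with ((sg q i j * sinh (nu / 2 * (q i - q j))) * d) by ring.
    apply is_derive_scal. apply derP; auto.
Qed.

Lemma dQ_L nu z p q i j a : (i <> j -> q i <> q j) ->
  dQ (Lrho nu z i j) a p q =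
  Cmult (Cminus (RtoC (dlt a i)) (RtoC (dlt a j))) (QX nu z p q i j).
Proof.
  intros Hq. unfold dQ, Lrho, Tm, Sm.
  rewrite (DeriveC_lin z _ _ (q a)
     (nu / 2 * sqrt (p i * p j) * sinh (nu / 2 * (q i - q j)) * (dlt a i - dlt a j))
     (nu / 2 * sqrt (p i * p j) * sg q i j * cosh (nu / 2 * (q i - q j)) * (dlt a i - dlt a j))).
  - unfold QX. destruct z as [zr zi]. apply injective_projections; simpl; ring.
  - apply derQ1.
  - apply derQ2; auto.
Qed.

Lemma sumC_ext n f g : (forall a, (a < n)%nat -> f a = g a) -> sumC n f = sumC n g.
Proof.
  induction n; intros H; simpl; auto.
  rewrite IHn by (intros; apply H; lia). rewrite H by lia. reflexivity.
Qed.

Lemma sumC_plus n f g : sumC n (fun a => Cplus (f a) (g a)) = Cplus (sumC n f) (sumC n g).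
Proof.
  induction n; simpl.
  - apply injective_projections; simpl; ring.
  - rewrite IHn. ring.
Qed.

Lemma sumC_delta n i f : (i < n)%nat -> sumC n (fun a => Cmult (RtoC (dlt a i)) (f a)) = f i.
Proof.
  induction n; intros H; simpl. lia.
  destruct (Nat.eq_dec i n) as [->|Hne].
  - rewrite (sumC_ext n _ (fun _ => RtoC 0)).
    + assert (Z : forall m, sumC m (fun _ => RtoC 0) = RtoC 0).
      { induction m; simpl; auto. rewrite IHm. ring. }
      rewrite Z. unfold dlt. destruct (Nat.eq_dec n n); try congruence. ring.
    + intros a Ha. unfold dlt. destruct (Nat.eq_dec a n); try lia. ring.
  - rewrite IHn by lia. unfold dlt. destruct (Nat.eq_dec n i); try congruence. ring.
Qed.

Definition Wf (gamma nu : R) (p q : nat -> R) (XA YA XB YB : C) (a b : nat) : C :=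
  Cplus (Cplus (Cmult (Cmult XA XB) (RtoC (Bpp gamma nu p q a b)))
               (Cmult (Cmult YA XB) (RtoC (Bqp gamma nu p q a b))))
        (Cplus (Cmult (Cmult XA YB) (RtoC (- Bqp gamma nu p q b a)))
               (Cmult (Cmult YA YB) (RtoC (Bqq gamma nu q a b)))).

Lemma PB2_collapse N gamma nu F G p q i j k l X1 X2 Y Z1 Z2 V :
  (i < N)%nat -> (j < N)%nat -> (k < N)%nat -> (l < N)%nat ->
  (forall a, dP F a p q = Cplus (Cmult (RtoC (dlt a i)) X1) (Cmult (RtoC (dlt a j)) X2)) ->
  (forall a, dQ F a p q = Cmult (Cminus (RtoC (dlt a i)) (RtoC (dlt a j))) Y) ->
  (forall b, dP G b p q = Cplus (Cmult (RtoC (dlt b k)) Z1) (Cmult (RtoC (dlt b l)) Z2)) ->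
  (forall b, dQ G b p q = Cmult (Cminus (RtoC (dlt b k)) (RtoC (dlt b l))) V) ->
  PB2 N gamma nu F G p q =
  Cplus (Cplus (Wf gamma nu p q X1 Y Z1 V i k) (Wf gamma nu p q X1 Y Z2 (Copp V) i l))
        (Cplus (Wf gamma nu p q X2 (Copp Y) Z1 V j k) (Wf gamma nu p q X2 (Copp Y) Z2 (Copp V) j l)).
Proof.
  intros Hi Hj Hk Hl HPF HQF HPG HQG. unfold PB2.
  set (W1 := Wf gamma nu p q X1 Y Z1 V). set (W2 := Wf gamma nu p q X1 Y Z2 (Copp V)).
  set (W3 := Wf gamma nu p q X2 (Copp Y) Z1 V). set (W4 := Wf gamma nu p q X2 (Copp Y) Z2 (Copp V)).
  rewrite (sumC_ext N _ (fun a => Cplus (Cplus (Cmult (RtoC (dlt a i)) (W1 a k)) (Cmult (RtoC (dlt a i)) (W2 a l)))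
                                       (Cplus (Cmult (RtoC (dlt a j)) (W3 a k)) (Cmult (RtoC (dlt a j)) (W4 a l))))).
  - rewrite !sumC_plus, !sumC_delta by auto. reflexivity.
  - intros a Ha.
    rewrite (sumC_ext N _ (fun b => Cplus (Cplus (Cmult (RtoC (dlt b k)) (Cmult (RtoC (dlt a i)) (W1 a b)))
                                                (Cmult (RtoC (dlt b l)) (Cmult (RtoC (dlt a i)) (W2 a b))))
                                         (Cplus (Cmult (RtoC (dlt b k)) (Cmult (RtoC (dlt a j)) (W3 a b)))
                                                (Cmult (RtoC (dlt b l)) (Cmult (RtoC (dlt a j)) (W4 a b)))))).
    + rewrite !sumC_plus, !sumC_delta by auto. reflexivity.
    + intros b Hb. rewrite HPF, HQF, HPG, HQG. unfold W1, W2, W3, W4, Wf. ring.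
Qed.

Lemma sg_lt (q : nat -> R) a b : q a < q b -> sg q a b = -1.
Proof. intros H. unfold sg, sgn. destruct (Rlt_dec 0 (q a - q b)); try lra. destruct (Rlt_dec (q a - q b) 0); lra. Qed.
Lemma sg_gt (q : nat -> R) a b : q a < q b -> sg q b a = 1.
Proof. intros H. unfold sg, sgn. destruct (Rlt_dec 0 (q b - q a)); lra. Qed.
Lemma sg_eq (q : nat -> R) a : sg q a a = 0.
Proof. unfold sg, sgn. rewrite Rminus_diag. destruct (Rlt_dec 0 0); [lra|]. reflexivity. Qed.

Lemma EA1 nu (q : nat -> R) a b : q a < q b ->
  exp (nu * Rabs (q a - q b)) = exp (nu/2 * q b) * exp (nu/2 * q b) / (exp (nu/2 * q a) * exp (nu/2 * q a)).
Proof. intros H. rewrite Rabs_left by lra. rewrite <- !exp_plus. unfold Rdiv. rewrite <- exp_Ropp, <- exp_plus. f_equal. field. Qed.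
Lemma EA2 nu (q : nat -> R) a b : q a < q b ->
  exp (nu * Rabs (q b - q a)) = exp (nu/2 * q b) * exp (nu/2 * q b) / (exp (nu/2 * q a) * exp (nu/2 * q a)).
Proof. intros H. rewrite Rabs_right by lra. rewrite <- !exp_plus. unfold Rdiv. rewrite <- exp_Ropp, <- exp_plus. f_equal. field. Qed.
Lemma EB1 nu (q : nat -> R) a b : q a < q b ->
  exp (- nu * Rabs (q a - q b)) = exp (nu/2 * q a) * exp (nu/2 * q a) / (exp (nu/2 * q b) * exp (nu/2 * q b)).
Proof. intros H. rewrite Rabs_left by lra. rewrite <- !exp_plus. unfold Rdiv. rewrite <- exp_Ropp, <- exp_plus. f_equal. field. Qed.
Lemma EB2 nu (q : nat -> R) a b : q a < q b ->
  exp (- nu * Rabs (q b - q a)) = exp (nu/2 * q a) * exp (nu/2 * q a) / (exp (nu/2 * q b) * exp (nu/2 * q b)).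
Proof. intros H. rewrite Rabs_right by lra. rewrite <- !exp_plus. unfold Rdiv. rewrite <- exp_Ropp, <- exp_plus. f_equal. field. Qed.
Lemma EA0 nu (q : nat -> R) a : exp (nu * Rabs (q a - q a)) = 1.
Proof. rewrite Rminus_diag, Rabs_R0, Rmult_0_r. apply exp_0. Qed.
Lemma EB0 nu (q : nat -> R) a : exp (- nu * Rabs (q a - q a)) = 1.
Proof. rewrite Rminus_diag, Rabs_R0, Rmult_0_r. apply exp_0. Qed.

Lemma chX nu (q : nat -> R) a b :
  cosh (nu / 2 * (q a - q b)) = (exp (nu/2 * q a) / exp (nu/2 * q b) + exp (nu/2 * q b) / exp (nu/2 * q a)) / 2.
Proof. unfold cosh, Rdiv. rewrite <- !exp_Ropp, <- !exp_plus. f_equal. f_equal; f_equal; field. Qed.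
Lemma shX nu (q : nat -> R) a b :
  sinh (nu / 2 * (q a - q b)) = (exp (nu/2 * q a) / exp (nu/2 * q b) - exp (nu/2 * q b) / exp (nu/2 * q a)) / 2.
Proof. unfold sinh, Rdiv. rewrite <- !exp_Ropp, <- !exp_plus. f_equal. f_equal; f_equal; field. Qed.

Lemma RtoC_inv0 (x:R): RtoC (/x) = Cinv (RtoC x).
Proof. destruct (Req_dec x 0) as [->|H]. rewrite Rinv_0. unfold Cinv, RtoC; simpl.
 apply injective_projections; simpl; rewrite ?Rmult_0_l; unfold Rdiv; rewrite ?Rmult_0_l; lra.
 apply RtoC_inv; auto. Qed.

Lemma RtoC_neq (x : R) : x <> 0 -> RtoC x <> RtoC 0.
Proof. intros H E. apply H. apply RtoC_inj in E. auto. Qed.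

Lemma zsum g : Cplus (zplus g) (zminus g) = RtoC (- g).
Proof. unfold zplus, zminus. destruct (csqrtR (g ^ 2 - 4)) as [a b].
  apply injective_projections; simpl; field. Qed.

Lemma zprod g : Cmult (zplus g) (zminus g) = RtoC 1.
Proof. unfold zplus, zminus, csqrtR. destruct (Rle_dec 0 (g ^ 2 - 4)) as [H|H].
  - pose proof (sqrt_sqrt _ H) as E. set (s := sqrt (g^2-4)) in *.
    apply injective_projections; simpl; rewrite ?Rmult_0_l, ?Rmult_0_r; nra.
  - assert (H' : 0 <= - (g ^ 2 - 4)) by lra.
    pose proof (sqrt_sqrt _ H') as E. set (s := sqrt (- (g^2-4))) in *.
    apply injective_projections; simpl; rewrite ?Rmult_0_l, ?Rmult_0_r; nra.
Qed.

Lemma RtoC_div0 (x y : R) : RtoC (x / y) = Cdiv (RtoC x) (RtoC y).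
Proof. unfold Rdiv, Cdiv. rewrite RtoC_mult, RtoC_inv0. reflexivity. Qed.

Definition XX (nu : R) (q : nat -> R) (a : nat) : C := RtoC (exp (nu / 2 * q a)).

Lemma C_sg_lt (q : nat -> R) a b : q a < q b -> RtoC (sg q a b) = Copp (RtoC 1).
Proof. intros H. rewrite sg_lt by auto. apply RtoC_opp. Qed.
Lemma C_sg_gt (q : nat -> R) a b : q a < q b -> RtoC (sg q b a) = RtoC 1.
Proof. intros H. rewrite sg_gt by auto. reflexivity. Qed.
Lemma C_sg_eq (q : nat -> R) a : RtoC (sg q a a) = RtoC 0.
Proof. rewrite sg_eq. reflexivity. Qed.

Lemma C_EA1 nu (q : nat -> R) a b : q a < q b ->
  RtoC (exp (nu * Rabs (q a - q b))) = Cdiv (Cmult (XX nu q b) (XX nu q b)) (Cmult (XX nu q a) (XX nu q a)).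
Proof. intros H. rewrite EA1 by auto. unfold XX. rewrite RtoC_div0, !RtoC_mult. reflexivity. Qed.
Lemma C_EA2 nu (q : nat -> R) a b : q a < q b ->
  RtoC (exp (nu * Rabs (q b - q a))) = Cdiv (Cmult (XX nu q b) (XX nu q b)) (Cmult (XX nu q a) (XX nu q a)).
Proof. intros H. rewrite EA2 by auto. unfold XX. rewrite RtoC_div0, !RtoC_mult. reflexivity. Qed.
Lemma C_EB1 nu (q : nat -> R) a b : q a < q b ->
  RtoC (exp (- nu * Rabs (q a - q b))) = Cdiv (Cmult (XX nu q a) (XX nu q a)) (Cmult (XX nu q b) (XX nu q b)).
Proof. intros H. rewrite EB1 by auto. unfold XX. rewrite RtoC_div0, !RtoC_mult. reflexivity. Qed.
Lemma C_EB2 nu (q : nat -> R) a b : q a < q b ->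
  RtoC (exp (- nu * Rabs (q b - q a))) = Cdiv (Cmult (XX nu q a) (XX nu q a)) (Cmult (XX nu q b) (XX nu q b)).
Proof. intros H. rewrite EB2 by auto. unfold XX. rewrite RtoC_div0, !RtoC_mult. reflexivity. Qed.
Lemma C_EA0 nu (q : nat -> R) a : RtoC (exp (nu * Rabs (q a - q a))) = RtoC 1.
Proof. rewrite EA0. reflexivity. Qed.
Lemma C_EB0 nu (q : nat -> R) a : RtoC (exp (- nu * Rabs (q a - q a))) = RtoC 1.
Proof. rewrite EB0. reflexivity. Qed.

Lemma C_chX nu (q : nat -> R) a b :
  RtoC (cosh (nu / 2 * (q a - q b))) =
  Cdiv (Cplus (Cdiv (XX nu q a) (XX nu q b)) (Cdiv (XX nu q b) (XX nu q a))) (RtoC 2).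
Proof. rewrite chX. unfold XX. rewrite !RtoC_div0, RtoC_plus, !RtoC_div0. reflexivity. Qed.
Lemma C_shX nu (q : nat -> R) a b :
  RtoC (sinh (nu / 2 * (q a - q b))) =
  Cdiv (Cminus (Cdiv (XX nu q a) (XX nu q b)) (Cdiv (XX nu q b) (XX nu q a))) (RtoC 2).
Proof. rewrite shX. unfold XX. rewrite !RtoC_div0, RtoC_minus, !RtoC_div0. reflexivity. Qed.

Lemma C_sqrt2 (p : nat -> R) a b : 0 <= p a ->
  RtoC (sqrt (p a * p b)) = Cmult (RtoC (sqrt (p a))) (RtoC (sqrt (p b))).
Proof. intros H. rewrite sqrt_mult_alt by auto. apply RtoC_mult. Qed.
Lemma C_p (p : nat -> R) a : 0 <= p a -> RtoC (p a) = Cmult (RtoC (sqrt (p a))) (RtoC (sqrt (p a))).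
Proof. intros H. rewrite <- RtoC_mult, sqrt_sqrt by auto. reflexivity. Qed.

Theorem mainTheorem9 (N : nat) (nu gamma : R) (p q : nat -> R) (i j k l : nat) :
  (2 <= N)%nat -> nu <> 0 -> gamma <> 2 -> gamma <> -2 ->
  (forall a, (a < N)%nat -> 0 < p a) ->
  (forall a b, (a < N)%nat -> (b < N)%nat -> a <> b -> q a <> q b) ->
  (i < N)%nat -> (j < N)%nat -> (k < N)%nat -> (l < N)%nat ->
  let Lp := fun a b => Lrho nu (zplus gamma) a b p q in
  let Lm := fun a b => Lrho nu (zminus gamma) a b p q in
  PB2 N gamma nu (Lrho nu (zplus gamma) i j) (Lrho nu (zminus gamma) k l) p q =
  Cmult (RtoC (- (nu / 4)))
    (Cplus (Cplus (Cmult (RtoC (sg q i k)) (Cmult (Lp k j) (Lm i l)))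
                  (Cmult (RtoC (sg q j l)) (Cmult (Lm k j) (Lp i l))))
           (Cplus (Cmult (RtoC (sg q j k)) (Cmult (Lp i k) (Lm j l)))
                  (Cmult (RtoC (sg q i l)) (Cmult (Lm k i) (Lp l j))))).
Proof.
  intros HN Hnu Hg2 Hg2' Hp Hq Hi Hj Hk Hl Lp Lm.
  rewrite (PB2_collapse N gamma nu _ _ p q i j k l
     (PX nu (zplus gamma) p q i j (p j)) (PX nu (zplus gamma) p q i j (p i)) (QX nu (zplus gamma) p q i j)
     (PX nu (zminus gamma) p q k l (p l)) (PX nu (zminus gamma) p q k l (p k)) (QX nu (zminus gamma) p q k l));
   auto; intros; try apply dP_L; try apply dQ_L; auto.
  subst Lp Lm. cbv zeta.
  pose proof (zsum gamma) as Zs. pose proof (zprod gamma) as Zp.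
  generalize dependent (zminus gamma). generalize dependent (zplus gamma). intros zp zm Zs Zp.
  assert (Hzp : zp <> RtoC 0).
  { intros E. rewrite E in Zp. rewrite Cmult_0_l in Zp. apply RtoC_inj in Zp. lra. }
  assert (Ezm : zm = Cinv zp).
  { transitivity (Cmult (Cinv zp) (Cmult zp zm)). field. auto. rewrite Zp. field. auto. }
  assert (Eg : RtoC gamma = Copp (Cplus zp (Cinv zp))).
  { rewrite <- Ezm, Zs, RtoC_opp. ring. }
  subst zm.
  unfold Wf, PX, QX, Lrho, Tm, Sm, Bpp, Bqp, Bqq, QQ, SS.
  repeat (rewrite ?RtoC_plus, ?RtoC_minus, ?RtoC_opp, ?RtoC_mult, ?RtoC_div0, ?RtoC_inv0).
  rewrite ?C_chX, ?C_shX.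
  rewrite ?(C_sqrt2 p) by (left; apply Hp; assumption).
  rewrite ?(C_p p) by (left; apply Hp; assumption).
  rewrite Eg.
  clear Zp Zs Eg.
  (destruct (Nat.eq_dec i j) as [E1|E1]; destruct (Nat.eq_dec i k) as [E2|E2]; destruct (Nat.eq_dec i l) as [E3|E3];
  destruct (Nat.eq_dec j k) as [E4|E4]; destruct (Nat.eq_dec j l) as [E5|E5]; destruct (Nat.eq_dec k l) as [E6|E6];
  try (exfalso; lia); subst).
  all: repeat match goal with
         | H : ?a <> ?b |- _ =>
           let Hne := fresh in
           assert (Hne : q a <> q b) by (apply Hq; auto); clear H;
           let Ho := fresh "O" in
           destruct (Rlt_le_dec (q a) (q b)) as [Ho|Ho];
           [ | assert (q b < q a) by (destruct Ho; [auto| exfalso; apply Hne; auto]); clear Ho ];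
           clear Hne
       end.
  all: try (exfalso; lra).
  all: repeat match goal with
         | H : ?q ?a < ?q ?b |- context [sg ?q ?a ?b] => rewrite (C_sg_lt q a b H)
         | H : ?q ?a < ?q ?b |- context [sg ?q ?b ?a] => rewrite (C_sg_gt q a b H)
         | |- context [sg ?q ?a ?a] => rewrite (C_sg_eq q a)
         | H : ?q ?a < ?q ?b |- context [exp (- ?n * Rabs (?q ?a - ?q ?b))] => rewrite (C_EB1 n q a b H)
         | H : ?q ?a < ?q ?b |- context [exp (- ?n * Rabs (?q ?b - ?q ?a))] => rewrite (C_EB2 n q a b H)
         | H : ?q ?a < ?q ?b |- context [exp (?n * Rabs (?q ?a - ?q ?b))] => rewrite (C_EA1 n q a b H)
         | H : ?q ?a < ?q ?b |- context [exp (?n * Rabs (?q ?b - ?q ?a))] => rewrite (C_EA2 n q a b H)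
         | |- context [exp (- ?n * Rabs (?q ?a - ?q ?a))] => rewrite (C_EB0 n q a)
         | |- context [exp (?n * Rabs (?q ?a - ?q ?a))] => rewrite (C_EA0 n q a)
       end.

  all: (field; repeat split; try exact Hzp; intro E; unfold XX in E; apply RtoC_inj in E;
         match type of E with
         | exp ?t = 0 => pose proof (exp_pos t); lra
         | sqrt (?p ?a) = 0 => assert (0 < sqrt (p a)) by (apply sqrt_lt_R0, Hp; assumption); lra
         | _ => lra
         end).
Qed.
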